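(* Let $\mu>0$ and $d\in(0,1)$. For integers $N,L\ge1$ let $M=N+L$ and let $(\tau_1,\dots,\tau_M)\in\{0,1\}^M$ be uniformly distributed among configurations with $\sum_i\tau_i=N$ (the stationary distribution of TASEP on a ring of $M$ sites with $N$ particles), with $\tau_{M+1}=\tau_1$. Define $\phi=\frac{\mu}{M}\sum_{i=1}^M\tau_i(1-\tau_{i+1})$. Then as $N,L\to\infty$ with $N/(N+L)\to d$, $$L\cdot\mathrm{Var}(\phi)\longrightarrow \mu^2\,d^2(1-d)^3,$$ i.e. $\mathrm{Var}(\phi)=\frac{1-d}{L}\,d^2(1-d)^2\mu^2+o(1/L)$. *)

(* Defs.v *)
From Stdlib Require Import Reals List Arith.
Import ListNotations.
Open Scope R_scope.

Fixpoint bool_lists (n : nat) : list (list bool) :=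
  match n with
  | O => [nil]
  | S n' => map (cons true) (bool_lists n') ++ map (cons false) (bool_lists n')
  end.

Definition nparticles (t : list bool) : nat := length (filter (fun b => b) t).

(* Support of the uniform (stationary TASEP) measure: configurations of
   length M with exactly N particles. Each appears exactly once. *)
Definition configs (M N : nat) : list (list bool) :=
  filter (fun t => Nat.eqb (nparticles t) N) (bool_lists M).

Definition b2R (b : bool) : R := if b then 1 else 0.

(* tau_i for sites i = 0..M-1 (0-indexed), periodic: tau_M = tau_0. *)
Definition tau (M : nat) (t : list bool) (i : nat) : R := b2R (nth (i mod M) t false).

Definition sumR (f : nat -> R) (n : nat) : R :=
  fold_right Rplus 0 (map f (seq 0 n)).

Definition phi (mu : R) (M : nat) (t : list bool) : R :=
  mu / INR M * sumR (fun i => tau M t i * (1 - tau M t (S i))) M.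

Definition Expect (M N : nat) (f : list bool -> R) : R :=
  fold_right Rplus 0 (map f (configs M N)) / INR (length (configs M N)).

Definition Var (M N : nat) (f : list bool -> R) : R :=
  Expect M N (fun t => (f t - Expect M N f) ^ 2).

Definition Var_phi (mu : R) (N L : nat) : R :=
  Var (N + L) N (phi mu (N + L)).

(* Main.v *)
Require Import Defs.
From Stdlib Require Import Reals List Arith Lia Lra.
Import ListNotations.
Open Scope R_scope.
Open Scope bool_scope.


Fixpoint binom (n k : nat) : nat :=
  match n, k with
  | _, O => 1%nat
  | O, S _ => 0%nat
  | S n', S k' => (binom n' k' + binom n' (S k'))%nat
  end.

Lemma binom_n0 n : binom n 0 = 1%nat.
Proof. destruct n; reflexivity. Qed.

Lemma binom_gt n : forall k, (n < k)%nat -> binom n k = 0%nat.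
Proof.
  induction n as [|n IH]; intros [|k] H; simpl; try lia; try reflexivity.
  rewrite !IH; lia.
Qed.

Lemma binom_fact n : forall k, (k <= n)%nat ->
  (binom n k * fact k * fact (n - k) = fact n)%nat.
Proof.
  induction n as [|n IH]; intros [|k] H; simpl binom.
  - reflexivity.
  - lia.
  - rewrite Nat.sub_0_r. simpl. lia.
  - destruct (Nat.eq_dec k n) as [<-|Hk].
    + rewrite (binom_gt k (S k)) by lia. rewrite Nat.sub_diag.
      rewrite fact_simpl. specialize (IH k (le_n k)). rewrite Nat.sub_diag in IH.
      simpl fact in *. nia.
    + assert (Hs : (n - k = S (n - S k))%nat) by lia.
      replace (S n - S k)%nat with (n - k)%nat by lia.
      pose proof (IH k ltac:(lia)) as H1.
      pose proof (IH (S k) ltac:(lia)) as H2.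
      rewrite Hs in H1. rewrite fact_simpl in H1. rewrite (fact_simpl k) in H2.
      rewrite Hs, (fact_simpl (n - S k)), (fact_simpl k), (fact_simpl n).
      nia.
Qed.

Definition vc (b : bool) (o : option bool) : bool :=
  match o with Some v => Bool.eqb b v | None => true end.
Definition shift (c : nat -> option bool) : nat -> option bool := fun i => c (S i).

Fixpoint okb (c : nat -> option bool) (t : list bool) : bool :=
  match t with
  | nil => true
  | b :: t' => vc b (c O) && okb (shift c) t'
  end.

Fixpoint kM (c : nat -> option bool) (M : nat) : nat :=
  match M with O => O | S M' => ((if c O then 1 else 0) + kM (shift c) M')%nat end.
Fixpoint aM (c : nat -> option bool) (M : nat) : nat :=
  match M with O => O | S M' =>
    ((match c O with Some true => 1 | _ => 0 end) + aM (shift c) M')%nat end.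

Lemma okb_ext t : forall c c', (forall p, c p = c' p) -> okb c t = okb c' t.
Proof.
  induction t as [|b t IH]; intros c c' H; simpl; auto.
  rewrite H. f_equal. apply IH. intro p; apply H.
Qed.
Lemma kM_ext M : forall c c', (forall p, c p = c' p) -> kM c M = kM c' M.
Proof.
  induction M as [|M IH]; intros c c' H; simpl; auto.
  rewrite H. f_equal. apply IH. intro p; apply H.
Qed.
Lemma aM_ext M : forall c c', (forall p, c p = c' p) -> aM c M = aM c' M.
Proof.
  induction M as [|M IH]; intros c c' H; simpl; auto.
  rewrite H. f_equal. apply IH. intro p; apply H.
Qed.
Lemma kM_le M : forall c, (kM c M <= M)%nat.
Proof. induction M as [|M IH]; intros c; simpl; auto. specialize (IH (shift c)). destruct (c O); lia. Qed.

Lemma okb_none t : forall c, (forall p, c p = None) -> okb c t = true.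
Proof.
  induction t as [|b t IH]; intros c H; simpl; auto.
  rewrite H. simpl. apply IH. intro; apply H.
Qed.
Lemma kM_none M : forall c, (forall p, c p = None) -> kM c M = O.
Proof. induction M as [|M IH]; intros c H; simpl; auto. rewrite H, IH; auto. intro; apply H. Qed.
Lemma aM_none M : forall c, (forall p, c p = None) -> aM c M = O.
Proof. induction M as [|M IH]; intros c H; simpl; auto. rewrite H, IH; auto. intro; apply H. Qed.

Definition upd (c : nat -> option bool) (i : nat) (v : bool) : nat -> option bool :=
  fun p => if Nat.eqb p i then Some v else c p.

Lemma okb_upd t : forall c i v, (i < length t)%nat -> c i = None ->
  okb (upd c i v) t = okb c t && Bool.eqb (nth i t false) v.
Proof.
  induction t as [|b t IH]; intros c i v Hi Hc; simpl in *; [lia|].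
  destruct i as [|i].
  - unfold upd at 1. simpl. rewrite Hc. simpl.
    rewrite (okb_ext t (shift (upd c 0 v)) (shift c)).
    + destruct (okb (shift c) t), (Bool.eqb b v); reflexivity.
    + intro p. reflexivity.
  - unfold upd at 1. simpl.
    rewrite (okb_ext t (shift (upd c (S i) v)) (upd (shift c) i v)).
    + rewrite IH by (auto; lia). apply Bool.andb_assoc.
    + intro p. reflexivity.
Qed.

Lemma kaM_upd M : forall c i v, (i < M)%nat -> c i = None ->
  kM (upd c i v) M = S (kM c M) /\
  aM (upd c i v) M = ((if v then 1 else 0) + aM c M)%nat.
Proof.
  induction M as [|M IH]; intros c i v Hi Hc; simpl in *; [lia|].
  destruct i as [|i].
  - unfold upd at 1 3. simpl. rewrite Hc.
    rewrite (kM_ext M (shift (upd c 0 v)) (shift c)) by (intro; reflexivity).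
    rewrite (aM_ext M (shift (upd c 0 v)) (shift c)) by (intro; reflexivity).
    destruct v; split; reflexivity.
  - unfold upd at 1 3. simpl.
    rewrite (kM_ext M (shift (upd c (S i) v)) (upd (shift c) i v)) by (intro; reflexivity).
    rewrite (aM_ext M (shift (upd c (S i) v)) (upd (shift c) i v)) by (intro; reflexivity).
    destruct (IH (shift c) i v ltac:(lia) Hc) as [H1 H2].
    rewrite H1, H2. destruct (c O) as [[|]|], v; split; lia.
Qed.

Definition cntg (M N : nat) (c : nat -> option bool) : nat :=
  length (filter (fun t => Nat.eqb (nparticles t) N && okb c t) (bool_lists M)).

Lemma length_filter_map {A B} (p : B -> bool) (f : A -> B) l :
  length (filter p (map f l)) = length (filter (fun x => p (f x)) l).
Proof. induction l as [|a l IH]; simpl; auto. destruct (p (f a)); simpl; auto. Qed.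

Lemma length_filter_app {A} (p : A -> bool) l1 l2 :
  length (filter p (l1 ++ l2)) = (length (filter p l1) + length (filter p l2))%nat.
Proof. rewrite filter_app, length_app. reflexivity. Qed.

Lemma length_filter_false {A} (p : A -> bool) l : (forall x, p x = false) -> length (filter p l) = O.
Proof. intros H. induction l as [|a l IH]; simpl; auto. rewrite H; auto. Qed.

Lemma nparticles_cons b t : nparticles (b :: t) = ((if b then 1 else 0) + nparticles t)%nat.
Proof. unfold nparticles. simpl. destruct b; reflexivity. Qed.

Lemma cntg_S M N c : cntg (S M) N c =
  ((if vc true (c O) then match N with O => O | S N' => cntg M N' (shift c) end else O) +
   (if vc false (c O) then cntg M N (shift c) else O))%nat.
Proof.
  unfold cntg. simpl bool_lists. rewrite length_filter_app, !length_filter_map.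
  f_equal.
  - destruct (vc true (c O)) eqn:E.
    + destruct N as [|N].
      * apply length_filter_false. intro x. rewrite nparticles_cons. reflexivity.
      * f_equal. apply filter_ext. intro x. rewrite nparticles_cons. simpl. rewrite E. reflexivity.
    + apply length_filter_false. intro x. simpl. rewrite E. apply Bool.andb_false_r.
  - destruct (vc false (c O)) eqn:E.
    + f_equal. apply filter_ext. intro x. rewrite nparticles_cons. simpl. rewrite E. reflexivity.
    + apply length_filter_false. intro x. simpl. rewrite E. apply Bool.andb_false_r.
Qed.

Lemma cntg_vanish M : forall N c, (N < aM c M)%nat -> cntg M N c = O.
Proof.
  induction M as [|M IH]; intros N c H; simpl in H; [lia|].
  rewrite cntg_S. destruct (c O) as [[|]|]; simpl.
  - destruct N as [|N]; auto. rewrite IH by lia. lia.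
  - rewrite IH by lia. reflexivity.
  - destruct N as [|N]; rewrite !IH by lia; reflexivity.
Qed.

Lemma cntg_binom M : forall N c, cntg M (N + aM c M) c = binom (M - kM c M) N.
Proof.
  induction M as [|M IH]; intros N c.
  - simpl. rewrite Nat.add_0_r. unfold cntg. simpl.
    destruct N; reflexivity.
  - rewrite cntg_S. pose proof (kM_le M (shift c)) as Hk. simpl kM; simpl aM.
    assert (IH' := IH). 
    destruct (c O) as [[|]|]; cbn [vc Bool.eqb].
    + replace (N + (1 + aM (shift c) M))%nat with (S (N + aM (shift c) M)) by lia.
      rewrite IH, Nat.add_0_r. reflexivity.
    + rewrite !Nat.add_0_l, IH. reflexivity.
    + rewrite !Nat.add_0_l.
      replace (S M - kM (shift c) M)%nat with (S (M - kM (shift c) M)) by lia.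
      destruct N as [|N].
      * pose proof (IH 0%nat (shift c)) as H0. rewrite Nat.add_0_l in H0. cbn [Nat.add]. rewrite H0.
        destruct (aM (shift c) M) eqn:Ea.
        -- rewrite !binom_n0. reflexivity.
        -- rewrite cntg_vanish by lia. rewrite !binom_n0. reflexivity.
      * replace (S N + aM (shift c) M)%nat with (S (N + aM (shift c) M)) by lia.
        rewrite IH. pose proof (IH (S N) (shift c)) as H1. simpl Nat.add in H1. rewrite H1.
        reflexivity.
Qed.


Definition sumL {A} (l : list A) (f : A -> R) : R := fold_right Rplus 0 (map f l).

Lemma sumL_ext {A} (l : list A) f g : (forall x, In x l -> f x = g x) -> sumL l f = sumL l g.
Proof.
  induction l as [|a l IH]; intros H; unfold sumL in *; simpl; auto.
  rewrite H by (left; auto). rewrite IH; auto. intros; apply H; right; auto.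
Qed.
Lemma sumL_plus {A} (l : list A) f g : sumL l (fun x => f x + g x) = sumL l f + sumL l g.
Proof. induction l as [|a l IH]; unfold sumL in *; simpl; [lra|]. rewrite IH. lra. Qed.
Lemma sumL_scal {A} (l : list A) c f : sumL l (fun x => c * f x) = c * sumL l f.
Proof. induction l as [|a l IH]; unfold sumL in *; simpl; [lra|]. rewrite IH. lra. Qed.
Lemma sumL_const {A} (l : list A) c : sumL l (fun _ => c) = c * INR (length l).
Proof. induction l as [|a l IH]; unfold sumL in *; simpl length; [simpl; lra|]. 
  rewrite S_INR. simpl. rewrite IH. lra. Qed.
Lemma sumL_swap {A B} (l1 : list A) (l2 : list B) F :
  sumL l1 (fun a => sumL l2 (fun b => F a b)) = sumL l2 (fun b => sumL l1 (fun a => F a b)).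
Proof.
  induction l1 as [|a l IH].
  - unfold sumL at 1. simpl. symmetry. rewrite <- (Rmult_0_l (INR (length l2))).
    rewrite <- sumL_const. reflexivity.
  - unfold sumL at 1. simpl. fold (sumL l (fun a => sumL l2 (fun b => F a b))). rewrite IH.
    rewrite <- sumL_plus. reflexivity.
Qed.
Lemma sumL_mult {A B} (l1 : list A) (l2 : list B) f g :
  sumL l1 f * sumL l2 g = sumL l1 (fun a => sumL l2 (fun b => f a * g b)).
Proof.
  rewrite Rmult_comm. rewrite <- sumL_scal. apply sumL_ext. intros a _.
  rewrite Rmult_comm, <- sumL_scal. reflexivity.
Qed.
Lemma sumL_filter_b2R {A} (l : list A) q p :
  sumL (filter q l) (fun t => b2R (p t)) = INR (length (filter (fun t => q t && p t) l)).
Proof.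
  induction l as [|a l IH]; unfold sumL in *; simpl; [reflexivity|].
  destruct (q a) eqn:Eq, (p a) eqn:Ep; cbn [filter map fold_right length andb]; rewrite ?Eq, ?Ep; cbn [andb length]; rewrite ?S_INR, ?IH; unfold b2R; rewrite ?Ep; lra.
Qed.

Lemma sumR_S f n : sumR f (S n) = sumR f n + f n.
Proof.
  unfold sumR. rewrite seq_S, map_app, fold_right_app. simpl.
  generalize (map f (seq 0 n)). intros l. induction l; simpl; lra.
Qed.
Lemma sumR_sumL f n : sumR f n = sumL (seq 0 n) f.
Proof. reflexivity. Qed.
Lemma sumR_ind p a n : (p < n)%nat -> sumR (fun j => if Nat.eqb j p then a else 0) n = a.
Proof.
  induction n as [|n IH]; intros H; [lia|]. rewrite sumR_S.
  destruct (Nat.eq_dec p n) as [<-|Hn].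
  - rewrite Nat.eqb_refl. assert (sumR (fun j => if Nat.eqb j p then a else 0) p = 0).
    { clear. assert (forall m, (m <= p)%nat -> sumR (fun j => if Nat.eqb j p then a else 0) m = 0).
      { induction m; intros Hm. reflexivity. rewrite sumR_S, IHm by lia.
        replace (Nat.eqb m p) with false by (symmetry; apply Nat.eqb_neq; lia). lra. }
      apply H; lia. }
    lra.
  - rewrite IH by lia. replace (Nat.eqb n p) with false by (symmetry; apply Nat.eqb_neq; lia). lra.
Qed.

Lemma bool_lists_length M t : In t (bool_lists M) -> length t = M.
Proof.
  revert t; induction M as [|M IH]; intros t H; simpl in H.
  - destruct H as [<-|[]]; reflexivity.
  - apply in_app_or in H. destruct H as [H|H]; apply in_map_iff in H;
      destruct H as [t' [<- Ht']]; simpl; rewrite IH; auto.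
Qed.
Lemma configs_length M N t : In t (configs M N) -> length t = M.
Proof. unfold configs. intros H. apply filter_In in H. apply bool_lists_length, H. Qed.

Lemma b2R_andb a b : b2R (a && b) = b2R a * b2R b.
Proof. destruct a, b; simpl; lra. Qed.
Lemma b2R_eqb_true a : b2R (Bool.eqb a true) = b2R a.
Proof. destruct a; reflexivity. Qed.
Lemma b2R_eqb_false a : b2R (Bool.eqb a false) = 1 - b2R a.
Proof. destruct a; simpl; lra. Qed.

Definition B2 (p q : nat) (t : list bool) : R := b2R (nth p t false) * (1 - b2R (nth q t false)).

Lemma okb_upd2 c p q t : (p < length t)%nat -> (q < length t)%nat -> p <> q ->
  c p = None -> c q = None ->
  b2R (okb (upd (upd c p true) q false) t) = b2R (okb c t) * B2 p q t.
Proof.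
  intros Hp Hq Hpq Hcp Hcq.
  rewrite okb_upd; auto.
  2:{ unfold upd. replace (Nat.eqb q p) with false by (symmetry; apply Nat.eqb_neq; auto). auto. }
  rewrite okb_upd; auto. rewrite !b2R_andb, b2R_eqb_true, b2R_eqb_false. unfold B2. lra.
Qed.

Lemma kaM_upd2 c p q M : (p < M)%nat -> (q < M)%nat -> p <> q ->
  c p = None -> c q = None ->
  kM (upd (upd c p true) q false) M = S (S (kM c M)) /\
  aM (upd (upd c p true) q false) M = S (aM c M).
Proof.
  intros Hp Hq Hpq Hcp Hcq.
  destruct (kaM_upd M c p true Hp Hcp) as [H1 H2].
  destruct (kaM_upd M (upd c p true) q false Hq) as [H3 H4].
  { unfold upd. replace (Nat.eqb q p) with false by (symmetry; apply Nat.eqb_neq; auto). auto. }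
  rewrite H3, H4, H1, H2. split; reflexivity.
Qed.

Definition none : nat -> option bool := fun _ => None.

Definition nxt (M i : nat) : nat := if Nat.eqb (S i) M then O else S i.
Lemma nxt_lt M i : (i < M)%nat -> (nxt M i < M)%nat.
Proof. unfold nxt. destruct (Nat.eqb_spec (S i) M); lia. Qed.

Lemma tau_lt M t i : (i < M)%nat -> tau M t i = b2R (nth i t false).
Proof. intros H. unfold tau. rewrite Nat.mod_small by auto. reflexivity. Qed.
Lemma tau_S M t i : (i < M)%nat -> tau M t (S i) = b2R (nth (nxt M i) t false).
Proof.
  intros H. unfold tau, nxt. destruct (Nat.eqb_spec (S i) M) as [E|E].
  - rewrite E, Nat.mod_same by lia. reflexivity.
  - rewrite Nat.mod_small by lia. reflexivity.
Qed.


Definition Yf (M i : nat) (t : list bool) : R := tau M t i * (1 - tau M t (S i)).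
Definition prv (M i : nat) : nat := if Nat.eqb i 0 then (M - 1)%nat else (i - 1)%nat.

Ltac nx := unfold nxt, prv in *; repeat match goal with
  | |- context [Nat.eqb ?a ?b] => destruct (Nat.eqb_spec a b)
  | H : context [Nat.eqb ?a ?b] |- _ => destruct (Nat.eqb_spec a b)
  end; lia.

Lemma Yf_B2 M i t : (i < M)%nat -> Yf M i t = B2 i (nxt M i) t.
Proof. intros H. unfold Yf, B2. rewrite tau_lt, tau_S by auto. reflexivity. Qed.

Lemma sum_configs_okb M N c :
  sumL (configs M N) (fun t => b2R (okb c t)) = INR (cntg M N c).
Proof. unfold configs. rewrite sumL_filter_b2R. reflexivity. Qed.

Definition c2 M i := upd (upd none i true) (nxt M i) false.
Definition c4 M i j := upd (upd (c2 M i) j true) (nxt M j) false.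

Lemma S1_i M n i : (2 <= M)%nat -> (i < M)%nat ->
  sumL (configs M (n + 1)) (Yf M i) = INR (binom (M - 2) n).
Proof.
  intros HM Hi.
  assert (Hne : i <> nxt M i) by nx.
  assert (Hn : (nxt M i < M)%nat) by nx.
  rewrite (sumL_ext _ _ (fun t => b2R (okb (c2 M i) t))).
  2:{ intros t Ht. apply configs_length in Ht. unfold c2. rewrite okb_upd2; auto; try lia.
      rewrite okb_none by reflexivity. simpl. rewrite Yf_B2 by auto. lra. }
  rewrite sum_configs_okb.
  destruct (kaM_upd2 none i (nxt M i) M Hi Hn Hne eq_refl eq_refl) as [Hk Ha].
  rewrite (kM_none M none) in Hk by reflexivity. rewrite (aM_none M none) in Ha by reflexivity.
  fold (c2 M i) in Hk, Ha.
  replace (n + 1)%nat with (n + aM (c2 M i) M)%nat by lia.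
  rewrite cntg_binom, Hk. reflexivity.
Qed.

Lemma B2_sq p q t : B2 p q t * B2 p q t = B2 p q t.
Proof. unfold B2. destruct (nth p t false), (nth q t false); simpl; lra. Qed.

Definition Vij M N i j := sumL (configs M N) (fun t => Yf M i t * Yf M j t).

Lemma Vij_val M n i j : (4 <= M)%nat -> (i < M)%nat -> (j < M)%nat ->
  Vij M (n + 2) i j =
    INR (binom (M - 4) n)
    + (if Nat.eqb j i then INR (binom (M - 2) (S n)) - INR (binom (M - 4) n) else 0)
    + (if Nat.eqb j (nxt M i) then - INR (binom (M - 4) n) else 0)
    + (if Nat.eqb j (prv M i) then - INR (binom (M - 4) n) else 0).
Proof.
  intros HM Hi Hj. unfold Vij.
  destruct (Nat.eqb_spec j i) as [->|Hji].
  { rewrite (sumL_ext _ _ (Yf M i)).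
    2:{ intros t _. rewrite !Yf_B2 by auto. apply B2_sq. }
    replace (n + 2)%nat with (S n + 1)%nat by lia. rewrite S1_i by lia.
    replace (Nat.eqb i (nxt M i)) with false by (symmetry; apply Nat.eqb_neq; nx).
    replace (Nat.eqb i (prv M i)) with false by (symmetry; apply Nat.eqb_neq; nx). lra. }
  destruct (Nat.eqb_spec j (nxt M i)) as [Hj1|Hj1].
  { rewrite (sumL_ext _ _ (fun _ => 0)).
    2:{ intros t _. rewrite !Yf_B2 by auto. unfold B2. rewrite <- Hj1.
        destruct (nth i t false), (nth j t false); simpl; lra. }
    rewrite sumL_const.
    replace (Nat.eqb j (prv M i)) with false by (symmetry; apply Nat.eqb_neq; nx). lra. }
  destruct (Nat.eqb_spec j (prv M i)) as [Hj2|Hj2].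
  { rewrite (sumL_ext _ _ (fun _ => 0)).
    2:{ intros t _. rewrite !Yf_B2 by auto. unfold B2.
        replace (nxt M j) with i by nx.
        destruct (nth i t false), (nth j t false); simpl; lra. }
    rewrite sumL_const. lra. }
  assert (H1 : i <> nxt M i) by nx.
  assert (H2 : j <> nxt M j) by nx.
  assert (Hni : (nxt M i < M)%nat) by nx.
  assert (Hnj : (nxt M j < M)%nat) by nx.
  assert (Hc2j : c2 M i j = None).
  { unfold c2, upd. replace (Nat.eqb j (nxt M i)) with false by (symmetry; apply Nat.eqb_neq; nx).
    replace (Nat.eqb j i) with false by (symmetry; apply Nat.eqb_neq; nx). reflexivity. }
  assert (Hc2j' : c2 M i (nxt M j) = None).
  { unfold c2, upd. replace (Nat.eqb (nxt M j) (nxt M i)) with false by (symmetry; apply Nat.eqb_neq; nx).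
    replace (Nat.eqb (nxt M j) i) with false by (symmetry; apply Nat.eqb_neq; nx). reflexivity. }
  rewrite (sumL_ext _ _ (fun t => b2R (okb (c4 M i j) t))).
  2:{ intros t Ht. apply configs_length in Ht. unfold c4. rewrite okb_upd2; auto; try lia.
      unfold c2. rewrite okb_upd2; auto; try lia.
      rewrite okb_none by reflexivity. simpl. rewrite !Yf_B2 by auto. lra. }
  rewrite sum_configs_okb.
  destruct (kaM_upd2 none i (nxt M i) M Hi Hni H1 eq_refl eq_refl) as [Hk Ha].
  rewrite (kM_none M none) in Hk by reflexivity. rewrite (aM_none M none) in Ha by reflexivity. fold (c2 M i) in Hk, Ha.
  destruct (kaM_upd2 (c2 M i) j (nxt M j) M Hj Hnj H2 Hc2j Hc2j') as [Hk' Ha'].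
  fold (c4 M i j) in Hk', Ha'. rewrite Hk in Hk'. rewrite Ha in Ha'.
  replace (n + 2)%nat with (n + aM (c4 M i j) M)%nat by lia.
  rewrite cntg_binom, Hk'. replace (M - 4)%nat with (M - 4)%nat by lia. lra.
Qed.


Lemma sumR_ext f g n : (forall i, (i < n)%nat -> f i = g i) -> sumR f n = sumR g n.
Proof. intros H. rewrite !sumR_sumL. apply sumL_ext. intros x Hx. apply in_seq in Hx. apply H; lia. Qed.
Lemma sumR_const c n : sumR (fun _ => c) n = c * INR n.
Proof. rewrite sumR_sumL, sumL_const, length_seq. reflexivity. Qed.
Lemma sumR_plus f g n : sumR (fun i => f i + g i) n = sumR f n + sumR g n.
Proof. rewrite !sumR_sumL. apply sumL_plus. Qed.

Lemma inner_sum M n i : (4 <= M)%nat -> (i < M)%nat ->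
  sumR (fun j => Vij M (n + 2) i j) M =
  INR (binom (M - 2) (S n)) + (INR M - 3) * INR (binom (M - 4) n).
Proof.
  intros HM Hi.
  rewrite (sumR_ext _ (fun j => INR (binom (M - 4) n)
    + (if Nat.eqb j i then INR (binom (M - 2) (S n)) - INR (binom (M - 4) n) else 0)
    + (if Nat.eqb j (nxt M i) then - INR (binom (M - 4) n) else 0)
    + (if Nat.eqb j (prv M i) then - INR (binom (M - 4) n) else 0))).
  2:{ intros j Hj. apply Vij_val; auto. }
  rewrite !sumR_plus, sumR_const, !sumR_ind; auto.
  - lra.
  - unfold prv. destruct (Nat.eqb_spec i 0); lia.
  - apply nxt_lt; auto.
Qed.

Definition Xs M t := sumR (fun i => Yf M i t) M.

Lemma S1_val M n : (2 <= M)%nat ->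
  sumL (configs M (n + 1)) (Xs M) = INR M * INR (binom (M - 2) n).
Proof.
  intros HM. unfold Xs.
  change (sumL (configs M (n + 1)) (fun t => sumL (seq 0 M) (fun i => Yf M i t)) = INR M * INR (binom (M - 2) n)).
  rewrite (sumL_swap (configs M (n+1)) (seq 0 M) (fun t i => Yf M i t)).
  rewrite (sumL_ext _ _ (fun _ => INR (binom (M - 2) n))).
  - rewrite sumL_const, length_seq. lra.
  - intros i Hi. apply in_seq in Hi. apply S1_i; lia.
Qed.

Lemma S2_val M n : (4 <= M)%nat ->
  sumL (configs M (n + 2)) (fun t => Xs M t * Xs M t) =
  INR M * (INR (binom (M - 2) (S n)) + (INR M - 3) * INR (binom (M - 4) n)).
Proof.
  intros HM. unfold Xs.
  change (sumL (configs M (n + 2)) (fun t => sumL (seq 0 M) (fun i => Yf M i t) * sumL (seq 0 M) (fun i => Yf M i t)) =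
  INR M * (INR (binom (M - 2) (S n)) + (INR M - 3) * INR (binom (M - 4) n))).
  rewrite (sumL_ext _ _ (fun t => sumL (seq 0 M) (fun i => sumL (seq 0 M) (fun j => Yf M i t * Yf M j t)))).
  2:{ intros t _. apply sumL_mult. }
  rewrite (sumL_swap (configs M (n+2)) (seq 0 M)).
  rewrite (sumL_ext (seq 0 M) _ (fun _ => INR (binom (M - 2) (S n)) + (INR M - 3) * INR (binom (M - 4) n))).
  - rewrite sumL_const, length_seq. lra.
  - intros i Hi. apply in_seq in Hi.
    rewrite (sumL_swap (configs M (n+2)) (seq 0 M)).
    transitivity (sumR (fun j => Vij M (n+2) i j) M). reflexivity. apply inner_sum; lia.
Qed.

Lemma length_configs M N : length (configs M N) = cntg M N none.
Proof.
  unfold configs, cntg. f_equal. apply filter_ext. intro t.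
  rewrite okb_none by reflexivity. rewrite Bool.andb_true_r. reflexivity.
Qed.

Lemma length_configs_binom M N : length (configs M N) = binom M N.
Proof.
  rewrite length_configs. pose proof (cntg_binom M N none) as H.
  rewrite (aM_none M none), (kM_none M none) in H by reflexivity.
  rewrite Nat.add_0_r, Nat.sub_0_r in H. exact H.
Qed.

Lemma Var_eq M N f : length (configs M N) <> O ->
  Var M N f = sumL (configs M N) (fun t => f t * f t) / INR (length (configs M N))
              - (sumL (configs M N) f / INR (length (configs M N))) ^ 2.
Proof.
  intros H. unfold Var, Expect. fold (sumL (configs M N) f).
  set (C := INR (length (configs M N))). set (E := sumL (configs M N) f / C).
  fold (sumL (configs M N) (fun t => (f t - E) ^ 2)).
  rewrite (sumL_ext _ _ (fun t => (f t * f t + (-2 * E) * f t) + E ^ 2)).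
  2:{ intros; ring. }
  rewrite sumL_plus, sumL_plus, sumL_scal, sumL_const. fold C.
  assert (HC : C <> 0) by (unfold C; apply not_0_INR; auto).
  unfold E. field. auto.
Qed.

Lemma phi_Xs mu M t : phi mu M t = mu / INR M * Xs M t.
Proof. reflexivity. Qed.

Lemma Var_phi_binom mu n l :
  let M := (n + l + 4)%nat in
  Var_phi mu (n + 2) (l + 2) =
   (mu / INR M) ^ 2 * (INR M * (INR (binom (M - 2) (S n)) + (INR M - 3) * INR (binom (M - 4) n))
       / INR (binom M (n + 2))
     - (INR M * INR (binom (M - 2) (S n)) / INR (binom M (n + 2))) ^ 2).
Proof.
  intros M. unfold Var_phi. replace (n + 2 + (l + 2))%nat with M by (unfold M; lia).
  assert (Hb : binom M (n + 2) <> O).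
  { intro H0. pose proof (binom_fact M (n+2) ltac:(unfold M; lia)) as Hf.
    rewrite H0 in Hf. simpl in Hf. pose proof (lt_O_fact M). lia. }
  rewrite Var_eq by (rewrite length_configs_binom; auto).
  rewrite length_configs_binom.
  rewrite (sumL_ext _ _ (fun t => (mu / INR M) ^ 2 * (Xs M t * Xs M t))) by (intros t _; rewrite phi_Xs; ring).
  rewrite (sumL_ext _ (phi mu M) (fun t => mu / INR M * Xs M t)) by (intros; reflexivity).
  rewrite !sumL_scal.
  rewrite S2_val by (unfold M; lia).
  replace (n + 2)%nat with (S n + 1)%nat at 2 by lia.
  rewrite S1_val by (unfold M; lia).
  replace (S n + 1)%nat with (n + 2)%nat by lia.
  assert (INR (binom M (n + 2)) <> 0) by (apply not_0_INR; auto).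
  field. split; auto. apply not_0_INR. unfold M; lia.
Qed.


Lemma binomR n k : (k <= n)%nat ->
  INR (binom n k) = INR (fact n) / (INR (fact k) * INR (fact (n - k))).
Proof.
  intros H. pose proof (binom_fact n k H) as Hf.
  assert (H1 := lt_O_fact k). assert (H2 := lt_O_fact (n - k)).
  rewrite <- Hf, !mult_INR. field. split; apply not_0_INR; lia.
Qed.

Lemma Var_closed mu n l :
  let N := INR n + 2 in let L := INR l + 2 in let M := N + L in
  INR (l + 2) * Var_phi mu (n + 2) (l + 2) =
  mu ^ 2 * L * N * L * (N * L - M + 1) / (M ^ 2 * (M - 1) ^ 2 * (M - 2)).
Proof.
  intros N L M. rewrite Var_phi_binom.
  rewrite !binomR by lia.
  replace (n + l + 4 - 2)%nat with (n + l + 2)%nat by lia.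
  replace (n + l + 4 - 4)%nat with (n + l)%nat by lia.
  replace (n + l + 2 - S n)%nat with (S l)%nat by lia.
  replace (n + l - n)%nat with l by lia.
  replace (n + l + 4 - (n + 2))%nat with (S (S l)) by lia.
  replace (n + l + 4)%nat with (S (S (S (S (n + l))))) by lia.
  replace (n + l + 2)%nat with (S (S (n + l))) by lia.
  replace (n + 2)%nat with (S (S n)) by lia.
  replace (l + 2)%nat with (S (S l)) by lia.
  rewrite !fact_simpl. rewrite !mult_INR, !S_INR, !plus_INR.
  assert (Hn := lt_O_fact n). assert (Hl := lt_O_fact l). assert (Hnl := lt_O_fact (n + l)).
  assert (INR (fact n) <> 0) by (apply not_0_INR; lia).
  assert (INR (fact l) <> 0) by (apply not_0_INR; lia).
  assert (INR (fact (n + l)) <> 0) by (apply not_0_INR; lia).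
  pose proof (pos_INR n). pose proof (pos_INR l).
  unfold M, N, L. field. repeat split; lra.
Qed.

Close Scope bool_scope.
From Coquelicot Require Import Coquelicot.
Open Scope R_scope.


Theorem mainTheorem9 (mu d : R) (hmu : 0 < mu) (hd0 : 0 < d) (hd1 : d < 1)
  (Nk Lk : nat -> nat)
  (hpos : forall k, (1 <= Nk k)%nat /\ (1 <= Lk k)%nat)
  (hNinf : forall B : nat, exists K : nat, forall k, (K <= k)%nat -> (B <= Nk k)%nat)
  (hLinf : forall B : nat, exists K : nat, forall k, (K <= k)%nat -> (B <= Lk k)%nat)
  (hratio : Un_cv (fun k => INR (Nk k) / INR (Nk k + Lk k)) d) :
  Un_cv (fun k => INR (Lk k) * Var_phi mu (Nk k) (Lk k))
        (mu ^ 2 * d ^ 2 * (1 - d) ^ 3).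
Proof.
  set (x := fun k => INR (Nk k) / INR (Nk k + Lk k)).
  set (e := fun k => / INR (Nk k + Lk k)).
  assert (He : Un_cv e 0).
  { intros eps Heps. destruct (archimed_cor1 eps Heps) as [B [HB HB0]].
    destruct (hNinf B) as [K HK]. exists K. intros k Hk. specialize (HK k Hk).
    unfold R_dist, e. rewrite Rminus_0_r.
    assert (H0 : 0 < INR B) by (apply lt_0_INR; lia).
    assert (H1 : INR B <= INR (Nk k + Lk k)) by (apply le_INR; lia).
    rewrite Rabs_right.
    - apply Rle_lt_trans with (/ INR B); auto. apply Rinv_le_contravar; auto.
    - left. apply Rinv_0_lt_compat. lra. }
  apply is_lim_seq_Reals in He. apply is_lim_seq_Reals in hratio. fold x in hratio.
  apply is_lim_seq_Reals.
  set (v := fun k => mu ^ 2 * x k * ((1 - x k) * (1 - x k)) * (x k * (1 - x k) - e k + e k * e k)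
                      / ((1 - e k) * (1 - e k) * (1 - 2 * e k))).
  assert (Hv : is_lim_seq v (mu ^ 2 * d * ((1 - d) * (1 - d)) * (d * (1 - d) - 0 + 0 * 0)
                      / ((1 - 0) * (1 - 0) * (1 - 2 * 0)))).
  { unfold v. apply is_lim_seq_div'.
    - apply is_lim_seq_mult'. apply is_lim_seq_mult'. apply is_lim_seq_mult'.
      + apply is_lim_seq_const.
      + exact hratio.
      + apply is_lim_seq_mult'; apply is_lim_seq_minus'; auto; apply is_lim_seq_const.
      + apply is_lim_seq_plus'. apply is_lim_seq_minus'. 
        * apply is_lim_seq_mult'; auto. apply is_lim_seq_minus'; auto; apply is_lim_seq_const.
        * auto.
        * apply is_lim_seq_mult'; auto.
    - apply is_lim_seq_mult'. apply is_lim_seq_mult';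
        apply is_lim_seq_minus'; auto; apply is_lim_seq_const.
      apply is_lim_seq_minus'. apply is_lim_seq_const. apply is_lim_seq_mult'; auto. apply is_lim_seq_const.
    - lra. }
  replace (mu ^ 2 * d ^ 2 * (1 - d) ^ 3) with (mu ^ 2 * d * ((1 - d) * (1 - d)) * (d * (1 - d) - 0 + 0 * 0)
                      / ((1 - 0) * (1 - 0) * (1 - 2 * 0))) by (field; lra).
  apply (is_lim_seq_ext_loc v); auto.
  destruct (hNinf 2%nat) as [K1 HK1]. destruct (hLinf 2%nat) as [K2 HK2].
  exists (K1 + K2)%nat. intros k Hk.
  specialize (HK1 k ltac:(lia)). specialize (HK2 k ltac:(lia)).
  destruct (Nat.le_exists_sub 2 (Nk k) HK1) as [n [Hn _]].
  destruct (Nat.le_exists_sub 2 (Lk k) HK2) as [l [Hl _]].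
  unfold v, x, e. rewrite Hn, Hl. rewrite Var_closed.
  rewrite !plus_INR. simpl (INR 2).
  pose proof (pos_INR n). pose proof (pos_INR l).
  field. repeat split; lra.
Qed.
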